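(* Let $R=k\{x_1,\ldots,x_n;\,Q,\preceq\}$ be a PBW algebra, $M\subseteq R^s$ an $R$-subbimodule, and give $R^{\rm env}$ its PBW structure with one of the orders $\preceq^*$, $\preceq^c$, $\preceq_*$, $\preceq_c$ on $\mathbb{N}^{2n}$. If $G$ is a left Gröbner basis of the left $R^{\rm env}$-module $N_M=(\mathfrak m^s)^{-1}(M)\subseteq(R^{\rm env})^s$ with respect to TOP (resp. POT), then $\mathfrak m^s(G)\setminus\{0\}$ is a two-sided Gröbner basis of $M$ with respect to TOP (resp. POT) built from $\preceq$.
   Context: $k$ is a field; $x^\alpha=x_1^{\alpha_1}\cdots x_n^{\alpha_n}$. A PBW algebra $R=k\{x_1,\ldots,x_n;Q,\preceq\}$ is a quotient of $k\langle x_1,\ldots,x_n\rangle$ by the two-sided ideal generated by $Q=\{x_jx_i-q_{ji}x_ix_j-p_{ji};\,i<j\}$, $q_{ji}\in k^*$, each $p_{ji}$ a combination of standard monomials with exponents $\prec\epsilon_i+\epsilon_j$ for an admissible order $\preceq$ (total, compatible with addition, $0$ minimal), such that the standard monomials form a $k$-basis. $R^{\rm env}=R\otimes_kR^{\rm op}$ is the PBW algebra in the variables $x_1\otimes1,\ldots,x_n\otimes1,1\otimes x_n,\ldots,1\otimes x_1$ (in this order) with relations $(x_j\otimes1)(x_i\otimes1)-q_{ji}(x_i\otimes1)(x_j\otimes1)-p_{ji}\otimes1$, $(1\otimes x_j)(x_i\otimes1)-(x_i\otimes1)(1\otimes x_j)$, $(1\otimes x_i)(1\otimes x_j)-q_{ji}(1\otimes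 x_j)(1\otimes x_i)-1\otimes p_{ji}$; exponent $(\alpha,\beta)\in\mathbb N^{2n}$ corresponds to $x^\alpha\otimes x^{\beta^{\rm op}}$, $\beta^{\rm op}=(\beta_n,\ldots,\beta_1)$. With $\alpha\preceq^{\rm op}\beta$ iff $\alpha^{\rm op}\preceq\beta^{\rm op}$: $(\alpha,\beta)\prec^*(\gamma,\delta)$ iff $\beta\prec^{\rm op}\delta$ or ($\beta=\delta$, $\alpha\prec\gamma$); $(\alpha,\beta)\prec_*(\gamma,\delta)$ iff $\alpha\prec\gamma$ or ($\alpha=\gamma$, $\beta\prec^{\rm op}\delta$); $(\alpha,\beta)\prec^c(\gamma,\delta)$ iff $\alpha+\beta^{\rm op}\prec\gamma+\delta^{\rm op}$ or (equality and $\beta^{\rm op}\prec\delta^{\rm op}$); $(\alpha,\beta)\prec_c(\gamma,\delta)$ iff $\alpha+\beta^{\rm op}\prec\gamma+\delta^{\rm op}$ or (equality and $\alpha\prec\gamma$). For an admissible order $\le$ on $\mathbb N^m$, on $\mathbb N^{m,(s)}=\mathbb N^m\times\{1,\ldots,s\}$ TOP is: $(\alpha,i)<(\beta,j)$ iff $\alpha<\beta$, or $\alpha=\beta$ and $i>j$; POT is: $(\alpha,i)<(\beta,j)$ iff $i>j$, or $i=j$ and $\alpha<\beta$. For $A=R$ or $R^{\rm env}$ with standard basis $\mathbf e_i$ of $A^s$, a nonzero $\mathbf f=\sum c_{(\alpha,i)}x^\alpha\mathbf e_i$ has $\exp(\mathbf f)$ the largest $(\alpha,i)$ with nonzero coefficient;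 for $L\subseteq A^s$, $\mathrm{Exp}(L)=\{\exp(\mathbf f):0\ne\mathbf f\in L\}$; $(\alpha,i)+\mathbb N^m:=\{(\alpha+\gamma,i):\gamma\in\mathbb N^m\}$. A finite $G\subseteq L\setminus\{0\}$ is a left Gröbner basis of a left submodule $L\subseteq A^s$ if $L={}_A\langle G\rangle$ and $\mathrm{Exp}(L)=\bigcup_{\mathbf g\in G}(\exp(\mathbf g)+\mathbb N^m)$. A finite $G\subseteq M\setminus\{0\}$ is a two-sided Gröbner basis of an $R$-subbimodule $M\subseteq R^s$ if $M={}_R\langle G\rangle_R$ (sub-bimodule generated) and $\mathrm{Exp}(M)=\bigcup_{\mathbf g\in G}(\exp(\mathbf g)+\mathbb N^n)$. $R^s$ is a left $R^{\rm env}$-module via $(r\otimes r')\mathbf f=(rf_1r',\ldots,rf_sr')$; $\mathfrak m^s:(R^{\rm env})^s\to R^s$ applies $\mathfrak m(r\otimes r')=rr'$ coordinatewise. *)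

(* Defs.v *)
From HB Require Import structures.
From mathcomp Require Import all_boot all_order all_algebra.
Set Implicit Arguments.
Unset Strict Implicit.
Unset Printing Implicit Defensive.
Import GRing.Theory.
Local Open Scope ring_scope.

Definition mono (n : nat) := {ffun 'I_n -> nat}.
Definition madd n (a b : mono n) : mono n := [ffun i => (a i + b i)%N].
Definition mzero n : mono n := [ffun => 0%N].
Definition meps n (i : 'I_n) : mono n := [ffun j => nat_of_bool (j == i)].
Definition mrev n (a : mono n) : mono n := [ffun i => a (rev_ord i)].

Definition admissible n (le : rel (mono n)) : Prop :=
  (forall a, le a a) /\
  (forall a b, le a b -> le b a -> a = b) /\
  (forall a b c, le a b -> le b c -> le a c) /\
  (forall a b, le a b || le b a) /\
  (forall a b c, le a b -> le (madd a c) (madd b c)) /\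
  (forall a, le (mzero n) a).

Definition strict (T : eqType) (le : rel T) : rel T :=
  fun a b => le a b && (a != b).

Definition smono (k : fieldType) (R : algType k) n (x : 'I_n -> R) (a : mono n) : R :=
  \prod_(i < n) x i ^+ a i.

Definition is_basis (k : fieldType) (V : lmodType k) (I : eqType) (b : I -> V) : Prop :=
  (forall v : V, exists (l : seq I) (c : I -> k), v = \sum_(j <- l) c j *: b j) /\
  (forall (l : seq I) (c : I -> k), uniq l -> \sum_(j <- l) c j *: b j = 0 ->
     forall j, j \in l -> c j = 0).

Definition is_PBW (k : fieldType) (R : algType k) n (x : 'I_n -> R)
    (q : 'I_n -> 'I_n -> k) (p : 'I_n -> 'I_n -> R) (le : rel (mono n)) : Prop :=
  [/\ admissible le,
      (forall i j : 'I_n, (i < j)%N -> q j i != 0),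
      (forall i j : 'I_n, (i < j)%N -> x j * x i = q j i *: (x i * x j) + p j i),
      (forall i j : 'I_n, (i < j)%N -> exists (l : seq (mono n)) (c : mono n -> k),
          all (fun a => strict le a (madd (meps i) (meps j))) l /\
          p j i = \sum_(a <- l) c a *: smono x a) &
      is_basis (smono x)].

Section Exps.
Variables (k : fieldType) (A : algType k) (I : eqType) (b : I -> A) (s : nat).

Definition supp (v : A) (i : I) : Prop :=
  exists (l : seq I) (c : I -> k),
    [/\ uniq l, v = \sum_(j <- l) c j *: b j, i \in l & c i != 0].

(* the coefficient of (alpha, i), i.e. of x^alpha e_i, in f is nonzero *)
Definition vsupp (f : 'I_s -> A) (e : I * 'I_s) : Prop := supp (f e.2) e.1.

Definition vnonzero (f : 'I_s -> A) : Prop := exists i, f i != 0.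

Definition is_exp (ltm : rel (I * 'I_s)) (f : 'I_s -> A) (e : I * 'I_s) : Prop :=
  vsupp f e /\ forall e', vsupp f e' -> e' = e \/ ltm e' e.

Definition ExpSet (ltm : rel (I * 'I_s)) (L : ('I_s -> A) -> Prop) (e : I * 'I_s) : Prop :=
  exists f, [/\ L f, vnonzero f & is_exp ltm f e].

Definition vzero : 'I_s -> A := fun _ => 0.

Definition ConeUnion (addI : I -> I -> I) (ltm : rel (I * 'I_s))
    (G : seq ('I_s -> A)) (e : I * 'I_s) : Prop :=
  exists j, (j < size G)%N /\ exists e0 d,
    is_exp ltm (nth vzero G j) e0 /\ e = (addI e0.1 d, e0.2).

Definition lspan (G : seq ('I_s -> A)) (F : 'I_s -> A) : Prop :=
  exists c : nat -> A, forall i, F i = \sum_(j < size G) c j * nth vzero G j i.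

Definition tspan (G : seq ('I_s -> A)) (F : 'I_s -> A) : Prop :=
  exists l : seq (A * nat * A), all (fun t => (t.1.2 < size G)%N) l /\
    forall i, F i = \sum_(t <- l) t.1.1 * nth vzero G t.1.2 i * t.2.

Definition in_minus0 (L : ('I_s -> A) -> Prop) (G : seq ('I_s -> A)) : Prop :=
  forall j, (j < size G)%N -> L (nth vzero G j) /\ vnonzero (nth vzero G j).

Definition left_GB addI ltm (L : ('I_s -> A) -> Prop) (G : seq ('I_s -> A)) : Prop :=
  [/\ in_minus0 L G,
      (forall F, L F <-> lspan G F) &
      (forall e, ExpSet ltm L e <-> ConeUnion addI ltm G e)].

Definition twosided_GB addI ltm (M : ('I_s -> A) -> Prop) (G : seq ('I_s -> A)) : Prop :=
  [/\ in_minus0 M G,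
      (forall F, M F <-> tspan G F) &
      (forall e, ExpSet ltm M e <-> ConeUnion addI ltm G e)].
End Exps.

Definition subbimodule (k : fieldType) (R : algType k) s (M : ('I_s -> R) -> Prop) : Prop :=
  [/\ M (fun _ => 0),
      (forall f g, M f -> M g -> M (fun i => f i + g i)) &
      (forall a b f, M f -> M (fun i => a * f i * b))].

Inductive modord_kind := TOP | POT.

Definition modlt (I : eqType) s (t : modord_kind) (lt : rel I) : rel (I * 'I_s) :=
  fun e1 e2 => match t with
  | TOP => lt e1.1 e2.1 || (e1.1 == e2.1) && (e2.2 < e1.2)%N
  | POT => (e2.2 < e1.2)%N || (e1.2 == e2.2) && lt e1.1 e2.1
  end.

Inductive env_kind := EStar | ELowStar | EUpC | ELowC .

Definition madd2 n (a b : mono n * mono n) : mono n * mono n :=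
  (madd a.1 b.1, madd a.2 b.2).

Definition env_lt n (le : rel (mono n)) (o : env_kind) : rel (mono n * mono n) :=
  fun ab gd =>
  let lt := strict le in
  let ltop := fun u v => lt (mrev u) (mrev v) in
  let (a, b) := ab in let (g, d) := gd in
  match o with
  | EStar => ltop b d || (b == d) && lt a g
  | ELowStar => lt a g || (a == g) && ltop b d
  | EUpC => lt (madd a (mrev b)) (madd g (mrev d)) ||
            (madd a (mrev b) == madd g (mrev d)) && lt (mrev b) (mrev d)
  | ELowC => lt (madd a (mrev b)) (madd g (mrev d)) ||
            (madd a (mrev b) == madd g (mrev d)) && lt a g
  end.

(* E together with lam, rho is (isomorphic to) R (x)_k R^op: lam is a k-algebra
   map, rho a k-algebra anti-map, their images commute, and the products
   lam(x^alpha) rho(x^{beta^op}) (the standard monomials x^alpha (x) x^{beta^op}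
   of the PBW structure of R^env) form a k-basis of E. *)
Definition env_basis (k : fieldType) (R E : algType k) n (x : 'I_n -> R)
  (lam rho : R -> E) (ab : mono n * mono n) : E :=
  lam (smono x ab.1) * rho (smono x (mrev ab.2)).

Definition is_env (k : fieldType) (R E : algType k) n (x : 'I_n -> R)
    (lam rho : R -> E) : Prop :=
  [/\ ((forall a b, lam (a + b) = lam a + lam b) /\ (forall (c : k) a, lam (c *: a) = c *: lam a)),
      ((forall a b, lam (a * b) = lam a * lam b) /\ lam 1 = 1),
      ((forall a b, rho (a + b) = rho a + rho b) /\ (forall (c : k) a, rho (c *: a) = c *: rho a)),
      ((forall a b, rho (a * b) = rho b * rho a) /\ rho 1 = 1) &
      ((forall a b, lam a * rho b = rho b * lam a) /\ is_basis (env_basis x lam rho))].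

Definition is_mult_map (k : fieldType) (R E : algType k) (lam rho : R -> E) (m : E -> R) : Prop :=
  [/\ (forall u v, m (u + v) = m u + m v),
      (forall (c : k) u, m (c *: u) = c *: m u) &
      (forall a b, m (lam a * rho b) = a * b)].

(* Main.v *)
Require Import Defs.
From HB Require Import structures.
From mathcomp Require Import all_boot all_order all_algebra zify.
From Stdlib Require Import ClassicalEpsilon FunctionalExtensionality Classical.
Import GRing.Theory.
Set Implicit Arguments.
Unset Strict Implicit.
Unset Printing Implicit Defensive.

Lemma maddC n (a b : mono n) : madd a b = madd b a.
Proof. by apply/ffunP => i; rewrite !ffunE addnC. Qed.
Lemma maddA n (a b c : mono n) : madd a (madd b c) = madd (madd a b) c.
Proof. by apply/ffunP => i; rewrite !ffunE addnA. Qed.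
Lemma madd0 n (a : mono n) : madd a (mzero n) = a.
Proof. by apply/ffunP => i; rewrite !ffunE addn0. Qed.
Lemma madd0l n (a : mono n) : madd (mzero n) a = a.
Proof. by rewrite maddC madd0. Qed.
Lemma maddI n (a b c : mono n) : madd a c = madd b c -> a = b.
Proof. by move=> h; apply/ffunP => i; move/ffunP: h => /(_ i); rewrite !ffunE => /addIn. Qed.
Lemma mrevK n (a : mono n) : mrev (mrev a) = a.
Proof. by apply/ffunP => i; rewrite !ffunE rev_ordK. Qed.
Lemma mrev0 n : mrev (mzero n) = mzero n.
Proof. by apply/ffunP => i; rewrite !ffunE. Qed.
Lemma mrevD n (a b : mono n) : mrev (madd a b) = madd (mrev a) (mrev b).
Proof. by apply/ffunP => i; rewrite !ffunE. Qed.
Lemma madd_eq0 n (a b : mono n) : madd a b = mzero n -> a = mzero n.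
Proof.
by move/ffunP=> h; apply/ffunP => i; move: (h i); rewrite !ffunE => /eqP; rewrite addn_eq0 => /andP[/eqP -> _].
Qed.

Section Adm.
Variables (n : nat) (le : rel (mono n)).
Hypothesis ha : admissible le.
Local Notation lt := (strict le).

Lemma le_refl a : le a a. Proof. by case: ha. Qed.
Lemma le_anti a b : le a b -> le b a -> a = b. Proof. by case: ha => _ [h _]; apply: h. Qed.
Lemma le_trans a b c : le a b -> le b c -> le a c. Proof. by case: ha => _ [_ [h _]]; apply: h. Qed.
Lemma le_total a b : le a b || le b a. Proof. by case: ha => _ [_ [_ [h _]]]. Qed.
Lemma le_add a b c : le a b -> le (madd a c) (madd b c). Proof. by case: ha => _ [_ [_ [_ [h _]]]]; apply: h. Qed.
Lemma le0 a : le (mzero n) a. Proof. by case: ha => _ [_ [_ [_ [_ h]]]]. Qed.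

Lemma lt_le a b : lt a b -> le a b. Proof. by case/andP. Qed.
Lemma lt_neq a b : lt a b -> a != b. Proof. by case/andP. Qed.
Lemma lt_irr a : ~~ lt a a. Proof. by rewrite /strict eqxx andbF. Qed.
Lemma le_lt_trans a b c : le a b -> lt b c -> lt a c.
Proof.
move=> hab /andP[hbc nbc]; rewrite /strict (le_trans hab hbc) /=.
by apply/eqP => eac; subst; move/negP: nbc; apply; apply/eqP; apply: le_anti.
Qed.
Lemma lt_le_trans a b c : lt a b -> le b c -> lt a c.
Proof.
move=> /andP[hab nab] hbc; rewrite /strict (le_trans hab hbc) /=.
by apply/eqP => eac; subst; move/negP: nab; apply; apply/eqP; apply: le_anti.
Qed.
Lemma lt_trans a b c : lt a b -> lt b c -> lt a c.
Proof. by move=> h /lt_le; apply: lt_le_trans. Qed.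
Lemma lt_nle a b : lt a b -> ~~ le b a.
Proof. by move=> h; apply/negP => h'; move/negP: (lt_irr a); apply; apply: lt_le_trans h h'. Qed.
Lemma nlt_le a b : ~~ lt a b -> le b a.
Proof.
rewrite /strict negb_and negbK => /orP[h|/eqP->]; last exact: le_refl.
by have := le_total a b; rewrite (negPf h).
Qed.
Lemma nle_lt a b : ~~ le a b -> lt b a.
Proof.
move=> h; have := le_total a b; rewrite (negPf h) /= => h'.
by rewrite /strict h'; apply/eqP => e; subst; rewrite le_refl in h.
Qed.
Lemma le_addl a b c : le a b -> le (madd c a) (madd c b).
Proof. by rewrite ![madd c _]maddC; apply: le_add. Qed.
Lemma lt_add a b c : lt a b -> lt (madd a c) (madd b c).
Proof.
move=> /andP[h nh]; rewrite /strict le_add //=; apply/eqP => /maddI e.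
by rewrite e eqxx in nh.
Qed.
Lemma lt_addl a b c : lt a b -> lt (madd c a) (madd c b).
Proof. by rewrite ![madd c _]maddC; apply: lt_add. Qed.
Lemma le_addr a c : le a (madd a c).
Proof. by rewrite -{1}(madd0l a) ![madd _ a]maddC; apply: le_addl; apply: le0. Qed.
Lemma nlt0 a : ~~ lt a (mzero n).
Proof. by apply/negP => /lt_nle; rewrite le0. Qed.

Lemma min_tail (g : nat -> nat) i :
  exists j, (i < j)%N /\ forall j', (i < j')%N -> (g j <= g j')%N.
Proof.
suff H : forall N j0, (i < j0)%N -> (g j0 < N)%N ->
  exists j, (i < j)%N /\ forall j', (i < j')%N -> (g j <= g j')%N.
  by apply: (H (g i.+1).+1 i.+1).
elim=> [//|N IH] j0 ij0 gN.
case: (classic (exists j', (i < j')%N /\ (g j' < g j0)%N)).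
  move=> [j' [ij' gj']]; apply: (IH j') => //; exact: leq_trans gj' gN.
move=> hn; exists j0; split=> // j' ij'; rewrite leqNgt; apply/negP => h.
by apply: hn; exists j'.
Qed.

Lemma subseq1 (g : nat -> nat) :
  exists psi : nat -> nat, forall k, (psi k < psi k.+1)%N /\ (g (psi k) <= g (psi k.+1))%N.
Proof.
pose nxt i := proj1_sig (constructive_indefinite_description _ (min_tail g i)).
have hn i : (i < nxt i)%N /\ forall j', (i < j')%N -> (g (nxt i) <= g j')%N.
  by rewrite /nxt; case: (constructive_indefinite_description _ _).
exists (fun k => iter k.+1 nxt 0%N) => k; split.
  by rewrite [iter k.+2 _ _]/=; case: (hn (iter k.+1 nxt 0%N)).
rewrite [iter k.+1 _ _]/= [iter k.+2 _ _]/=.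
case: (hn (iter k nxt 0%N)) => h1 h2; apply: h2.
apply: (ltn_trans h1); by case: (hn (nxt (iter k nxt 0%N))).
Qed.

Lemma dickson_seq (cs : seq 'I_n) (f : nat -> mono n) :
  exists phi : nat -> nat, (forall k, (phi k < phi k.+1)%N) /\
    forall c, c \in cs -> forall k, (f (phi k) c <= f (phi k.+1) c)%N.
Proof.
elim: cs => [|c cs [phi [hinc hmon]]].
  by exists id.
have [psi hpsi] := subseq1 (fun k => f (phi k) c).
exists (fun k => phi (psi k)); split.
  move=> k; apply: (homo_ltn ltn_trans hinc); by case: (hpsi k).
move=> c'; rewrite inE => /orP[/eqP->|hc] j; first by case: (hpsi j).
have := @homo_leq nat (fun i => f (phi i) c') (fun a b => (a <= b)%N) leqnn
  (fun y x z => @leq_trans y x z) (hmon c' hc); apply.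
by apply: ltnW; case: (hpsi j).
Qed.

Lemma lt_wf : well_founded (fun a b => lt a b).
Proof.
move=> a0; apply: NNPP => H0.
have step : forall a, ~ Acc (fun a b => lt a b) a ->
    exists a', lt a' a /\ ~ Acc (fun a b => lt a b) a'.
  move=> a ha'; apply: NNPP => hn; apply: ha'; constructor => a' la.
  apply: NNPP => hn'; apply: hn; by exists a'.
pose S := {a | ~ Acc (fun a b => lt a b) a}.
pose nxt (s : S) : S := let h := constructive_indefinite_description _ (step _ (proj2_sig s)) in
   exist _ (proj1_sig h) (proj2 (proj2_sig h)).
pose f k := proj1_sig (iter k nxt (exist _ a0 H0)).
have hf k : lt (f k.+1) (f k).
  rewrite /f /=; set s := iter k nxt _; rewrite /nxt /=.
  by case: (constructive_indefinite_description _ _) => a' [].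
have [phi [hinc hmon]] := dickson_seq (enum 'I_n) f.
have hlt : lt (f (phi 1%N)) (f (phi 0%N)).
  apply: (@homo_ltn (mono n) f (fun a b => lt b a) _ hf _ _ (hinc 0%N)).
  by move=> y x z h1 h2; apply: lt_trans h2 h1.
have : le (f (phi 0%N)) (f (phi 1%N)).
  have -> : f (phi 1%N) = madd (f (phi 0%N)) [ffun c => (f (phi 1%N) c - f (phi 0%N) c)%N].
    apply/ffunP => c; rewrite !ffunE subnKC //; apply: hmon; by rewrite mem_enum.
  exact: le_addr.
by rewrite (negPf (lt_nle hlt)).
Qed.

End Adm.

Local Open Scope ring_scope.

Section Coef.
Variables (k : fieldType) (V : algType k) (I : eqType) (b : I -> V).
Hypothesis hb : is_basis b.

Definition lc (l : seq I) (c : I -> k) : V := \sum_(j <- l) c j *: b j.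
Definition coefs (l : seq I) (c : I -> k) (e : I) : k := \sum_(j <- l | j == e) c j.

Lemma coefs_uniq l c e : uniq l -> coefs l c e = if e \in l then c e else 0.
Proof.
move=> ul; rewrite /coefs; case: ifP => el.
  by rewrite -big_filter (@filter_pred1_uniq _ l e) // big_seq1.
by rewrite big1_seq // => j /andP[/eqP -> ]; rewrite el.
Qed.

Lemma coefs_out l c e : e \notin l -> coefs l c e = 0.
Proof. by move=> el; rewrite /coefs big1_seq // => j /andP[/eqP -> ] h; rewrite h in el. Qed.

Lemma lc_uniq_ext l c u : uniq u -> {subset l <= u} ->
  lc l c = \sum_(e <- u) coefs l c e *: b e.
Proof.
move=> uu sub; rewrite /lc /coefs.
transitivity (\sum_(e <- u) \sum_(j <- l) (if j == e then c j *: b j else 0)).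
  rewrite exchange_big /=; apply: eq_big_seq => j jl.
  rewrite (bigD1_seq j) ?sub //= eqxx big1 ?addr0 // => e /negPf.
  by rewrite eq_sym => ->.
apply: eq_bigr => e _; rewrite scaler_suml -big_mkcond /=.
by apply: eq_bigr => j /eqP ->.
Qed.

Lemma coefs_unique l1 c1 l2 c2 e : lc l1 c1 = lc l2 c2 -> coefs l1 c1 e = coefs l2 c2 e.
Proof.
move=> eq12; set u := undup (l1 ++ l2).
have uu : uniq u by exact: undup_uniq.
have s1 : {subset l1 <= u} by move=> y yl; rewrite mem_undup mem_cat yl.
have s2 : {subset l2 <= u} by move=> y yl; rewrite mem_undup mem_cat yl orbT.
have H : \sum_(j <- u) (coefs l1 c1 j - coefs l2 c2 j) *: b j = 0.
  rewrite (eq_bigr (fun j => coefs l1 c1 j *: b j - coefs l2 c2 j *: b j)); last first.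
    by move=> j _; rewrite scalerBl.
  by rewrite sumrB -lc_uniq_ext // -lc_uniq_ext // eq12 subrr.
case eu: (e \in u).
  by apply/eqP; rewrite -subr_eq0; apply/eqP; exact: (hb.2 _ _ uu H e eu).
rewrite !coefs_out //.
  by apply/negP => /s2; rewrite eu.
by apply/negP => /s1; rewrite eu.
Qed.

Definition rl (v : V) : seq I := proj1_sig (constructive_indefinite_description _ (hb.1 v)).
Definition rc (v : V) : I -> k :=
  proj1_sig (constructive_indefinite_description _
    (proj2_sig (constructive_indefinite_description _ (hb.1 v)))).
Lemma rep_eq v : v = lc (rl v) (rc v).
Proof.
rewrite /rl /rc; case: (constructive_indefinite_description _ _) => l /= h.
by case: (constructive_indefinite_description _ _).
Qed.

Definition coef (v : V) (e : I) : k := coefs (rl v) (rc v) e.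
Definition sl (v : V) : seq I := undup (rl v).

Lemma coef_lc l c e : coef (lc l c) e = coefs l c e.
Proof. by apply: coefs_unique; rewrite -rep_eq. Qed.

Lemma coef_out v e : e \notin sl v -> coef v e = 0.
Proof. by rewrite mem_undup; exact: coefs_out. Qed.

Lemma expand_ext v u : uniq u -> {subset sl v <= u} ->
  v = \sum_(e <- u) coef v e *: b e.
Proof.
move=> uu sub; rewrite {1}(rep_eq v) (@lc_uniq_ext _ _ u) //.
by move=> y yl; apply: sub; rewrite mem_undup.
Qed.

Lemma v_expand v : v = \sum_(e <- sl v) coef v e *: b e.
Proof. by apply: expand_ext => //; exact: undup_uniq. Qed.

Lemma coef_lcu u c e : uniq u -> coef (lc u c) e = if e \in u then c e else 0.
Proof. by move=> uu; rewrite coef_lc coefs_uniq. Qed.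

Lemma coefD v w e : coef (v + w) e = coef v e + coef w e.
Proof.
set u := undup (sl v ++ sl w).
have uu : uniq u by exact: undup_uniq.
have s1 : {subset sl v <= u} by move=> y yl; rewrite mem_undup mem_cat yl.
have s2 : {subset sl w <= u} by move=> y yl; rewrite mem_undup mem_cat yl orbT.
have -> : v + w = lc u (fun e => coef v e + coef w e).
  rewrite {1}(expand_ext uu s1) {1}(expand_ext uu s2) -big_split /=.
  by apply: eq_bigr => j _; rewrite scalerDl.
rewrite coef_lcu //; case: ifP => // eu.
rewrite !coef_out ?addr0 //; apply/negP.
  by move/s2; rewrite eu.
by move/s1; rewrite eu.
Qed.


Lemma coefZ a v e : coef (a *: v) e = a * coef v e.
Proof.
have uu : uniq (sl v) by exact: undup_uniq.
have -> : a *: v = lc (sl v) (fun e => a * coef v e).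
  by rewrite {1}(v_expand v) scaler_sumr; apply: eq_bigr => j _; rewrite scalerA.
rewrite coef_lcu //; case: ifP => // eu.
by rewrite coef_out ?eu // mulr0.
Qed.

Lemma coef0 e : coef 0 e = 0.
Proof. by rewrite -(scale0r (0:V)) coefZ mul0r. Qed.

Lemma coefb j e : coef (b j) e = (e == j)%:R.
Proof.
have -> : b j = lc [:: j] (fun _ => 1) by rewrite /lc big_seq1 scale1r.
by rewrite coef_lcu // inE; case: (e == j).
Qed.

Lemma coef_sum (J : Type) (r : seq J) (P : pred J) (F : J -> V) e :
  coef (\sum_(i <- r | P i) F i) e = \sum_(i <- r | P i) coef (F i) e.
Proof. exact: (big_morph (coef^~ e) (fun v w => coefD v w e) (coef0 e)). Qed.

Lemma coef_eq0 v : (forall e, coef v e = 0) -> v = 0.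
Proof. by move=> h; rewrite (v_expand v) big1 // => e _; rewrite h scale0r. Qed.

Lemma coef_sl v e : coef v e != 0 -> e \in sl v.
Proof. by apply: contraR => /coef_out ->. Qed.

Lemma supp_coef v e : supp b v e <-> coef v e != 0.
Proof.
split.
  move=> [l [c [ul ev el ce]]].
  by rewrite ev -/(lc l c) coef_lcu // el.
move=> ce; exists (sl v), (coef v); split => //; first exact: undup_uniq.
  exact: v_expand.
exact: coef_sl.
Qed.

End Coef.


Section Words.
Variables (k : fieldType) (R : algType k) (n : nat) (x : 'I_n -> R).

Definition deg (w : seq 'I_n) : mono n := [ffun i => count_mem i w].
Definition prodw (w : seq 'I_n) : R := \prod_(i <- w) x i.
Definition cw (d : mono n) : seq 'I_n := flatten [seq nseq (d i) i | i <- index_enum 'I_n].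
Definition leo (a b : 'I_n) := (a <= b)%N.

Lemma deg_cat u v : deg (u ++ v) = madd (deg u) (deg v).
Proof. by apply/ffunP => i; rewrite !ffunE count_cat. Qed.
Lemma prodw_cat u v : prodw (u ++ v) = prodw u * prodw v.
Proof. by rewrite /prodw big_cat. Qed.

Lemma iter_mulE (a : R) m : iter m (GRing.mul a) 1 = a ^+ m.
Proof. by elim: m => [|m IH] //=; rewrite IH exprS. Qed.

Lemma prodw_cw d : prodw (cw d) = smono x d.
Proof.
rewrite /prodw /cw /smono big_flatten /= big_map.
by apply: eq_bigr => i _; rewrite big_nseq iter_mulE.
Qed.

Lemma deg_cw d : deg (cw d) = d.
Proof.
apply/ffunP => i; rewrite ffunE /cw count_flatten -map_comp.
rewrite (eq_map (g := fun j => (j == i) * d j)%N); last first.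
  by move=> j /=; rewrite count_nseq.
rewrite sumnE big_map (bigD1_seq i) ?mem_index_enum ?index_enum_uniq //= eqxx mul1n.
by rewrite big1 ?addn0 // => j /negPf ->.
Qed.

Lemma pairwise_nseq m (a : 'I_n) : pairwise leo (nseq m a).
Proof.
elim: m => //= m ->; rewrite andbT all_nseq; apply/orP; right; exact: leqnn.
Qed.

Lemma pairwise_cw_gen (d : mono n) (r : seq 'I_n) :
  pairwise leo r -> pairwise leo (flatten [seq nseq (d i) i | i <- r]).
Proof.
elim: r => //= a r IH /andP[ha hr]; rewrite pairwise_cat IH // pairwise_nseq !andbT.
apply/allrelP => y z; rewrite mem_nseq => /andP[_ /eqP->] /flattenP[s].
move/mapP=> [j jr ->]; rewrite mem_nseq => /andP[_ /eqP->].
by move/allP: ha => /(_ j jr).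
Qed.

Lemma leo_trans : transitive leo.
Proof. move=> a b c; exact: leq_trans. Qed.
Lemma leo_anti : antisymmetric leo.
Proof. by move=> a b /andP[h1 h2]; apply/val_inj/eqP; rewrite eqn_leq; apply/andP. Qed.

Lemma sorted_cw d : sorted leo (cw d).
Proof.
rewrite sorted_pairwise; last exact: leo_trans.
apply: pairwise_cw_gen; rewrite -sorted_pairwise; last exact: leo_trans.
rewrite [index_enum _]unlock -enumT.
have := iota_sorted 0 n; rewrite -val_enum_ord sorted_map; exact.
Qed.

Lemma sorted_eq_cw w : sorted leo w -> w = cw (deg w).
Proof.
move=> hs; apply: (sorted_eq leo_trans leo_anti) => //; first exact: sorted_cw.
apply/allP => y _ /=; apply/eqP.
by have := congr1 (fun f : mono n => f y) (deg_cw (deg w)); rewrite !ffunE => ->.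
Qed.

Lemma descent w : ~~ sorted leo w ->
  exists u v (i j : 'I_n), w = u ++ j :: i :: v /\ (i < j)%N.
Proof.
elim: w => [//|a w IH]; case: w IH => [//|b w] IH /=.
case hab: (leo a b) => /= hs.
  have [u [v [i [j [-> h]]]]] := IH hs.
  by exists (a :: u), v, i, j.
exists [::], w, b, a; split=> //; by rewrite ltnNge; apply/negbT.
Qed.

Fixpoint mu (w : seq 'I_n) : nat :=
  if w is a :: w' then ((size w').+1 * a + mu w')%N else 0%N.

Lemma mu_swap u v (i j : 'I_n) : (i < j)%N ->
  (mu (u ++ i :: j :: v) < mu (u ++ j :: i :: v))%N.
Proof.
move=> hij; elim: u => [|a u IH] /=.
  set z := size v; set y := mu v; nia.
rewrite !size_cat /=; set z := size _; lia.
Qed.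

End Words.


Section PBW.
Variables (k : fieldType) (R : algType k) (n : nat) (x : 'I_n -> R)
    (q : 'I_n -> 'I_n -> k) (p : 'I_n -> 'I_n -> R) (le : rel (mono n)).
Hypothesis hP : is_PBW x q p le.

Lemma pbw_adm : admissible le. Proof. by case: hP. Qed.
Lemma pbw_basis : is_basis (smono x). Proof. by case: hP. Qed.
Local Notation coefR := (coef pbw_basis).
Definition dom (r : R) (d : mono n) := forall g, ~~ le g d -> coefR r g = 0.

Lemma deg_swap u v (i j : 'I_n) :
  deg (u ++ j :: i :: v) = madd (deg u) (madd (madd (meps i) (meps j)) (deg v)).
Proof.
apply/ffunP => y; rewrite !ffunE count_cat /= !(eq_sym y).
by case: (i == y); case: (j == y) => /=; lia.
Qed.

Lemma deg_swap' u v (i j : 'I_n) : deg (u ++ i :: j :: v) = deg (u ++ j :: i :: v).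
Proof.
apply/ffunP => y; rewrite !ffunE !count_cat /=.
by case: (i == y); case: (j == y) => /=; lia.
Qed.

Lemma pbw_word w : coefR (prodw x w) (deg w) != 0 /\ dom (prodw x w) (deg w).
Proof.
have ha := pbw_adm.
suff H : forall d w, deg w = d -> coefR (prodw x w) d != 0 /\ dom (prodw x w) d.
  by apply: H.
clear w.
move=> d; induction d as [d IHd] using (well_founded_induction (lt_wf ha)).
move=> w; move: (ltnSn (mu w)); move: {2}(mu w).+1 => N.
elim: N w => [//|N IHN] w hmu hdeg.
case: (boolP (sorted (@leo n) w)) => hs.
  rewrite (sorted_eq_cw hs) prodw_cw hdeg coefb eqxx; split.
    exact: oner_neq0.
  move=> g hg; rewrite coefb; case: eqP => // eg; subst.
  by rewrite le_refl in hg.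
have [u [v [i [j [ew hij]]]]] := descent hs.
set w' := u ++ i :: j :: v.
have hdeg' : deg w' = d by rewrite /w' deg_swap' -ew.
have hmu' : (mu w' < N)%N.
  have := mu_swap u v hij; rewrite -ew => h; exact: leq_trans h hmu.
have [IH1 IH2] := IHN w' hmu' hdeg'.
case: hP => _ hq hrel hp _.
have [l [c [hl hpl]]] := hp i j hij.
have ew2 : prodw x w = q j i *: prodw x w' +
    \sum_(a <- l) c a *: prodw x (u ++ cw a ++ v).
  rewrite ew /w' !prodw_cat {1 2}/prodw !big_cons.
  have -> : prodw x u * (x j * (x i * \prod_(j0 <- v) x j0)) =
      prodw x u * (x j * x i) * prodw x v by rewrite !mulrA.
  rewrite hrel // hpl mulrDr mulrDl; congr (_ + _).
    by rewrite -scalerAr -scalerAl /prodw !big_cons !mulrA.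
  rewrite mulr_sumr mulr_suml; apply: eq_bigr => a _.
  by rewrite -scalerAr -scalerAl -prodw_cw !prodw_cat !mulrA.
have hlow : forall a, a \in l -> strict le (deg (u ++ cw a ++ v)) d.
  move=> a al; rewrite -hdeg ew deg_swap !deg_cat deg_cw.
  apply: lt_addl => //; apply: lt_add => //; by move/allP: hl => /(_ a al).
have hzero : forall a g, a \in l -> ~~ strict le g d -> coefR (prodw x (u ++ cw a ++ v)) g = 0.
  move=> a g al hg; have [_ hd] := IHd _ (hlow a al) (u ++ cw a ++ v) erefl.
  apply: hd; apply/negP => hle; move/negP: hg; apply; apply: le_lt_trans hle (hlow a al) => //.
have hcoef g : coefR (prodw x w) g = q j i * coefR (prodw x w') g +
    \sum_(a <- l) c a * coefR (prodw x (u ++ cw a ++ v)) g.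
  by rewrite ew2 coefD coefZ coef_sum; congr (_ + _); apply: eq_bigr => a _; rewrite coefZ.
split.
  rewrite hcoef big1_seq ?addr0; last first.
    by move=> a /andP[_ al]; rewrite hzero ?mulr0 // lt_irr.
  by rewrite mulf_neq0 // hq.
move=> g hg; rewrite hcoef IH2 // mulr0 add0r big1_seq // => a /andP[_ al].
rewrite hzero ?mulr0 //; apply/negP => /lt_le hle; by rewrite hle in hg.
Qed.

Lemma pbw_prod a b : coefR (smono x a * smono x b) (madd a b) != 0 /\
   dom (smono x a * smono x b) (madd a b).
Proof.
by have := pbw_word (cw a ++ cw b); rewrite prodw_cat !prodw_cw deg_cat !deg_cw.
Qed.

End PBW.


Section Transfer.
Variables (k : fieldType) (V1 V2 : algType k) (I1 I2 : eqType) (b1 : I1 -> V1) (b2 : I2 -> V2)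
 (hb1 : is_basis b1) (hb2 : is_basis b2) (s : nat) (t : modord_kind)
 (lt1 : rel I1) (lt2 : rel I2) (u : 'I_s -> V1) (v : 'I_s -> V2) (psi : I1 -> I2) (w : I1 -> V2)
 (Q : I2 -> I1 -> Prop) (e : I1) (i0 : 'I_s).
Hypotheses
 (hv : forall i, v i = \sum_(a <- sl hb1 (u i)) coef hb1 (u i) a *: w a)
 (hw : forall a g, coef hb2 (w a) g != 0 -> Q g a)
 (ha : forall a g, Q g a -> lt1 a e -> lt2 g (psi e))
 (hb : forall g, Q g e -> g = psi e \/ lt2 g (psi e))
 (hc : forall a, lt1 a e -> ~ Q (psi e) a)
 (hwe : coef hb2 (w e) (psi e) != 0)
 (hexp : is_exp b1 (modlt t lt1) u (e, i0)).

Lemma coef_v i g : coef hb2 (v i) g = \sum_(a <- sl hb1 (u i)) coef hb1 (u i) a * coef hb2 (w a) g.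
Proof. by rewrite hv coef_sum; apply: eq_bigr => a _; rewrite coefZ. Qed.

Lemma transfer : is_exp b2 (modlt t lt2) v (psi e, i0).
Proof.
case: hexp => hs1 hs2.
have hs1' : coef hb1 (u i0) e != 0 by move/(supp_coef hb1): hs1.
split.
  apply/(supp_coef hb2) => /=; rewrite coef_v (bigD1_seq e) ?undup_uniq ?coef_sl //=.
  rewrite big1 ?addr0 ?mulf_neq0 // => a nae.
  case: (boolP (coef hb1 (u i0) a == 0)) => [/eqP->|ca]; first by rewrite mul0r.
  have : vsupp b1 u (a, i0) by apply/(supp_coef hb1).
  move/hs2 => [[ae]|hl]; first by rewrite ae eqxx in nae.
  have hl' : lt1 a e by case: t hl => /=; rewrite ?ltnn ?eqxx ?andbF ?orbF //=.
  case: (boolP (coef hb2 (w a) (psi e) == 0)) => [/eqP->|cw]; first by rewrite mulr0.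
  by exfalso; apply: (hc hl'); apply: hw.
move=> [g i] /(supp_coef hb2) /= hg.
have [a [al [ca cw]]] : exists a, a \in sl hb1 (u i) /\ coef hb1 (u i) a != 0 /\ coef hb2 (w a) g != 0.
  apply: NNPP => hn; move: hg; rewrite coef_v big1_seq ?eqxx // => a /andP[_ al].
  case: (boolP (coef hb1 (u i) a == 0)) => [/eqP->|ca]; first by rewrite mul0r.
  case: (boolP (coef hb2 (w a) g == 0)) => [/eqP->|cw]; first by rewrite mulr0.
  by exfalso; apply: hn; exists a.
have hQ := hw cw.
have : vsupp b1 u (a, i) by apply/(supp_coef hb1).
move/hs2 => [[ae ie]|].
  subst a i; case: (hb hQ) => [->|hl]; [by left | right].
  by case: t => /=; rewrite ?hl ?ltnn ?eqxx.
case: t => /= /orP[hl|/andP[/eqP ea hl]].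
- by right; rewrite (ha hQ hl).
- subst a; case: (hb hQ) => [->|hl']; right; by rewrite ?hl' ?eqxx ?hl ?orbT.
- by right; rewrite hl.
- subst i; by right; rewrite (ha hQ hl) eqxx orbT.
Qed.

End Transfer.


Lemma nth_filter_ex (T : Type) (x0 : T) (P : pred T) (s : seq T) j :
  (j < size s)%N -> P (nth x0 s j) ->
  exists idx, (idx < size (filter P s))%N /\ nth x0 (filter P s) idx = nth x0 s j.
Proof.
elim: s j => [//|a s IH] [|j] /= hj hP.
  by rewrite hP; exists 0%N.
have [idx [h1 h2]] := IH j hj hP.
case: (P a); last by exists idx.
by exists idx.+1.
Qed.

Lemma nth_filter_in (T : Type) (x0 : T) (P : pred T) (s : seq T) idx :
  (idx < size (filter P s))%N ->
  exists j, [/\ (j < size s)%N, nth x0 (filter P s) idx = nth x0 s j & P (nth x0 s j)].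
Proof.
elim: s idx => [//|a s IH] idx /=.
case hPa: (P a) => /=.
  case: idx => [|idx] /= h; first by exists 0%N.
  by have [j [h1 h2 h3]] := IH idx h; exists j.+1.
by move=> h; have [j [h1 h2 h3]] := IH idx h; exists j.+1.
Qed.

Section Tspan.
Variables (k : fieldType) (A : algType k) (s : nat) (Gs : seq ('I_s -> A)).

Lemma tspan_ext f g : tspan Gs f -> (forall i, f i = g i) -> tspan Gs g.
Proof. by move=> [l [hl hf]] h; exists l; split=> // i; rewrite -h. Qed.

Lemma tspan0 : tspan Gs (fun _ => 0).
Proof. by exists [::]; split=> // i; rewrite big_nil. Qed.

Lemma tspan_add f g : tspan Gs f -> tspan Gs g -> tspan Gs (fun i => f i + g i).
Proof.
move=> [l1 [h1 f1]] [l2 [h2 f2]]; exists (l1 ++ l2); split.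
  by rewrite all_cat h1 h2.
by move=> i; rewrite big_cat /= f1 f2.
Qed.

Lemma tspan_scale f a b : tspan Gs f -> tspan Gs (fun i => a * f i * b).
Proof.
move=> [l [hl hf]]; exists [seq (a * t.1.1, t.1.2, t.2 * b) | t <- l]; split.
  by rewrite all_map; apply: sub_all hl => t.
move=> i; rewrite hf big_map mulr_sumr mulr_suml; apply: eq_bigr => t _ /=.
by rewrite !mulrA.
Qed.

Lemma tspan_gen idx : (idx < size Gs)%N -> tspan Gs (nth (@vzero k A s) Gs idx).
Proof.
by move=> h; exists [:: (1, idx, 1)]; split; rewrite /= ?h // => i; rewrite big_seq1 /= mul1r mulr1.
Qed.

Lemma tspan_sum (J : Type) (r : seq J) (F : J -> 'I_s -> A) :
  (forall j, tspan Gs (F j)) -> tspan Gs (fun i => \sum_(j <- r) F j i).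
Proof.
move=> h; elim: r => [|a r IH].
  by apply: tspan_ext tspan0 _ => i; rewrite big_nil.
by apply: tspan_ext (tspan_add (h a) IH) _ => i; rewrite big_cons.
Qed.
End Tspan.

Lemma M_sum (k : fieldType) (R : algType k) (s : nat) (M : ('I_s -> R) -> Prop)
  (J : Type) (r : seq J) (F : J -> 'I_s -> R) :
  subbimodule M -> (forall j, M (F j)) -> M (fun i => \sum_(j <- r) F j i).
Proof.
move=> [h0 hD _] h; elim: r => [|a r IH].
  by have -> : (fun i : 'I_s => \sum_(j <- [::]) F j i) = (fun _ => 0)
    by apply: functional_extensionality => i; rewrite big_nil.
have -> : (fun i : 'I_s => \sum_(j <- a :: r) F j i) =
   (fun i => F a i + \sum_(j <- r) F j i)
  by apply: functional_extensionality => i; rewrite big_cons.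
exact: hD.
Qed.


Section Main.
Variables (k : fieldType) (R E : algType k) (n : nat) (x : 'I_n -> R)
    (q : 'I_n -> 'I_n -> k) (p : 'I_n -> 'I_n -> R) (le : rel (mono n))
    (lam rho : R -> E) (m : E -> R).
Hypotheses (hP : is_PBW x q p le) (henv : is_env x lam rho) (hm : is_mult_map lam rho m).

Local Notation bR := (smono x).
Local Notation bE := (env_basis x lam rho).
Local Notation lt := (strict le).
Let ha := pbw_adm hP.
Let hbR := pbw_basis hP.
Lemma hbE : is_basis bE. Proof. by case: henv => _ _ _ _ []. Qed.
Local Notation cR := (coef hbR).
Local Notation cE := (coef hbE).

Lemma lamD a b : lam (a + b) = lam a + lam b. Proof. by case: henv => [[h _]]. Qed.
Lemma lamZ (c : k) a : lam (c *: a) = c *: lam a. Proof. by case: henv => [[_ h]]. Qed.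
Lemma lamM a b : lam (a * b) = lam a * lam b. Proof. by case: henv => _ [h _]. Qed.
Lemma lam1 : lam 1 = 1. Proof. by case: henv => _ [_ h]. Qed.
Lemma rhoD a b : rho (a + b) = rho a + rho b. Proof. by case: henv => _ _ [h _]. Qed.
Lemma rhoZ (c : k) a : rho (c *: a) = c *: rho a. Proof. by case: henv => _ _ [_ h]. Qed.
Lemma rhoM a b : rho (a * b) = rho b * rho a. Proof. by case: henv => _ _ _ [h _]. Qed.
Lemma rho1 : rho 1 = 1. Proof. by case: henv => _ _ _ [_ h]. Qed.
Lemma lamrho a b : lam a * rho b = rho b * lam a. Proof. by case: henv => _ _ _ _ [h _]. Qed.
Lemma mD u v : m (u + v) = m u + m v. Proof. by case: hm. Qed.
Lemma mZ (c : k) u : m (c *: u) = c *: m u. Proof. by case: hm. Qed.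
Lemma mlr a b : m (lam a * rho b) = a * b. Proof. by case: hm. Qed.

Lemma lam0 : lam 0 = 0. Proof. by rewrite -(scale0r (0:R)) lamZ scale0r. Qed.
Lemma rho0 : rho 0 = 0. Proof. by rewrite -(scale0r (0:R)) rhoZ scale0r. Qed.
Lemma m0 : m 0 = 0. Proof. by rewrite -(scale0r (0:E)) mZ scale0r. Qed.
Lemma lam_sum (J : Type) (r : seq J) (F : J -> R) : lam (\sum_(j <- r) F j) = \sum_(j <- r) lam (F j).
Proof. exact: (big_morph lam lamD lam0). Qed.
Lemma rho_sum (J : Type) (r : seq J) (F : J -> R) : rho (\sum_(j <- r) F j) = \sum_(j <- r) rho (F j).
Proof. exact: (big_morph rho rhoD rho0). Qed.
Lemma m_sum (J : Type) (r : seq J) (F : J -> E) : m (\sum_(j <- r) F j) = \sum_(j <- r) m (F j).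
Proof. exact: (big_morph m mD m0). Qed.

Lemma m_lam r : m (lam r) = r. Proof. by rewrite -[lam r]mulr1 -rho1 mlr mulr1. Qed.
Lemma m_rho r : m (rho r) = r. Proof. by rewrite -[rho r]mul1r -lam1 mlr mul1r. Qed.

Lemma smono0 : smono x (mzero n) = 1.
Proof. by rewrite /smono big1 // => i _; rewrite ffunE expr0. Qed.

Lemma lam_b a : lam (smono x a) = bE (a, mzero n).
Proof. by rewrite /env_basis /= mrev0 smono0 rho1 mulr1. Qed.
Lemma rho_b a : rho (smono x a) = bE (mzero n, mrev a).
Proof. by rewrite /env_basis /= mrevK smono0 lam1 mul1r. Qed.
Lemma m_b ab : m (bE ab) = smono x ab.1 * smono x (mrev ab.2).
Proof. by rewrite /env_basis mlr. Qed.

Lemma mK a b u : m (lam a * rho b * u) = a * m u * b.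
Proof.
rewrite (v_expand hbE u) mulr_sumr !m_sum mulr_sumr mulr_suml.
apply: eq_bigr => j _; rewrite -scalerAr mZ mZ -scalerAr -scalerAl; congr (_ *: _).
rewrite /env_basis mulrA -(mulrA (lam a)) -lamrho mulrA -lamM -mulrA -rhoM mlr mlr.
by rewrite !mulrA.
Qed.


Definition useLam (o : env_kind) : bool :=
  match o with EStar | EUpC => true | _ => false end.

Lemma lift_exp o t s (f : 'I_s -> R) e1 i0 :
  is_exp bR (modlt t lt) f (e1, i0) ->
  is_exp bE (modlt t (env_lt le o)) (fun i => if useLam o then lam (f i) else rho (f i))
     ((if useLam o then (e1, mzero n) else (mzero n, mrev e1)), i0).
Proof.
move=> hexp; case ho: (useLam o).
  eapply transfer with (hb1 := hbR) (hb2 := hbE) (lt1 := lt) (lt2 := env_lt le o) (u := f) (psi := fun a => (a, mzero n))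
     (w := fun a => bE (a, mzero n)) (Q := fun g a => g = (a, mzero n)) => //.
  - move=> i; rewrite {1}(v_expand hbR (f i)) lam_sum; apply: eq_bigr => a _.
    by rewrite lamZ lam_b.
  - by move=> a g; rewrite coefb; case: (g =P (a, mzero n)) => // _; rewrite eqxx.
  - move=> a g -> hl; case: o ho => //= _; rewrite /env_lt /=.
      by rewrite eqxx hl orbT.
    by rewrite mrev0 !madd0 hl.
  - by move=> g ->; left.
  - by move=> a hl [ea]; subst; rewrite /strict eqxx andbF in hl.
  - by rewrite coefb eqxx oner_neq0.
eapply transfer with (hb1 := hbR) (hb2 := hbE) (lt1 := lt) (lt2 := env_lt le o) (u := f) (psi := fun a => (mzero n, mrev a))
   (w := fun a => bE (mzero n, mrev a)) (Q := fun g a => g = (mzero n, mrev a)) => //.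
- move=> i; rewrite {1}(v_expand hbR (f i)) rho_sum; apply: eq_bigr => a _.
  by rewrite rhoZ rho_b.
- by move=> a g; rewrite coefb; case: (g =P (mzero n, mrev a)) => // _; rewrite eqxx.
- move=> a g -> hl; case: o ho => //= _; rewrite /env_lt /=.
    by rewrite !mrevK eqxx hl orbT.
  by rewrite !mrevK !madd0l hl.
- by move=> g ->; left.
- move=> a hl [ea]; have : mrev (mrev e1) = mrev (mrev a) by rewrite ea.
  by rewrite !mrevK => ea'; subst; rewrite /strict eqxx andbF in hl.
- by rewrite coefb eqxx oner_neq0.
Qed.

Lemma key_ord o (ab ab' : mono n * mono n) :
  (if useLam o then ab'.2 = mzero n else ab'.1 = mzero n) ->
  env_lt le o ab ab' -> lt (madd ab.1 (mrev ab.2)) (madd ab'.1 (mrev ab'.2)).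
Proof.
case: ab ab' => [al be] [a b]; case: o => /= h; subst; rewrite /env_lt /=.
- rewrite mrev0 (negPf (nlt0 ha _)) /= => /andP[/eqP -> hl].
  by rewrite mrev0 !madd0.
- rewrite (negPf (nlt0 ha _)) /= => /andP[/eqP -> hl].
  by rewrite !madd0l.
- by rewrite mrev0 (negPf (nlt0 ha _)) andbF orbF.
- by rewrite (negPf (nlt0 ha _)) andbF orbF.
Qed.

Lemma pbw_le a b g : cR (smono x a * smono x b) g != 0 -> le g (madd a b).
Proof.
apply: contraR => h; apply/eqP; exact: (pbw_prod hP a b).2.
Qed.

Lemma exp_m o t s (g : 'I_s -> E) ab i0 :
  (if useLam o then ab.2 = mzero n else ab.1 = mzero n) ->
  is_exp bE (modlt t (env_lt le o)) g (ab, i0) ->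
  is_exp bR (modlt t lt) (fun i => m (g i)) (madd ab.1 (mrev ab.2), i0).
Proof.
move=> hab hexp.
eapply transfer with (hb1 := hbE) (hb2 := hbR) (lt1 := env_lt le o) (lt2 := lt) (u := g) (psi := fun ab : mono n * mono n => madd ab.1 (mrev ab.2))
   (w := fun ab : mono n * mono n => smono x ab.1 * smono x (mrev ab.2))
   (Q := fun g ab => le g (madd ab.1 (mrev ab.2))) (e := ab) => //.
- move=> i; rewrite {1}(v_expand hbE (g i)) m_sum; apply: eq_bigr => a _.
  by rewrite mZ m_b.
- by move=> a g'; apply: pbw_le.
- move=> a g' /= hl hlt; exact: (le_lt_trans ha hl (key_ord hab hlt)).
- move=> g'; case: (g' =P madd ab.1 (mrev ab.2)) => [->|ne] hl; first by left.
  by right; rewrite /strict hl; apply/eqP.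
- by move=> a hlt; apply/negP; exact: (lt_nle ha (key_ord hab hlt)).
- exact: (pbw_prod hP _ _).1.
Qed.

Lemma exp_left t s (g : 'I_s -> R) e0 i0 d :
  is_exp bR (modlt t lt) g (e0, i0) ->
  is_exp bR (modlt t lt) (fun i => smono x d * g i) (madd e0 d, i0).
Proof.
move=> hexp.
eapply transfer with (hb1 := hbR) (hb2 := hbR) (lt1 := lt) (lt2 := lt) (u := g) (psi := fun a => madd a d)
   (w := fun a => smono x d * smono x a)
   (Q := fun g a => le g (madd a d)) (e := e0) => //.
- move=> i; rewrite {1}(v_expand hbR (g i)) mulr_sumr; apply: eq_bigr => a _.
  by rewrite scalerAr.
- by move=> a g'; rewrite maddC; apply: pbw_le.
- move=> a g' /= hl hlt; exact: (le_lt_trans ha hl (lt_add ha d hlt)).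
- move=> g'; case: (g' =P madd e0 d) => [->|ne] hl; first by left.
  by right; rewrite /strict hl; apply/eqP.
- by move=> a hlt; apply/negP; exact: (lt_nle ha (lt_add ha d hlt)).
- by rewrite maddC; exact: (pbw_prod hP _ _).1.
Qed.

Lemma exp_nonzero (V : algType k) (I : eqType) (b : I -> V) (hb : is_basis b) s ltm
   (f : 'I_s -> V) e : is_exp b ltm f e -> f e.2 != 0.
Proof. by move=> [/(supp_coef hb) h _]; apply: contraNneq h => ->; rewrite coef0. Qed.

Lemma main_thm (s : nat) (M : ('I_s -> R) -> Prop) (o : env_kind) (t : modord_kind)
    (G : seq ('I_s -> E)) :
  subbimodule M ->
  left_GB bE (@madd2 n) (modlt t (env_lt le o)) (fun F : 'I_s -> E => M (fun i => m (F i))) G ->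
  twosided_GB bR (@madd n) (modlt t lt) M
    [seq g <- [seq (fun i => m (F i)) | F <- G] | [exists i, g i != 0]].
Proof.
move=> hM [hin hspan hexpE].
have [hM0 hMD hMS] := hM.
set zR := @vzero k R s; set zE := @vzero k E s.
set G' := [seq g <- _ | _].
have hG'in : forall idx, (idx < size G')%N -> exists j, [/\ (j < size G)%N,
    nth zR G' idx = (fun i => m (nth zE G j i)) & [exists i, m (nth zE G j i) != 0]].
  move=> idx h; have [j [hj e1 hP']] := nth_filter_in zR h.
  rewrite size_map in hj; rewrite (nth_map zE) // in e1 hP'.
  by exists j.
have hG'ex : forall j, (j < size G)%N -> [exists i, m (nth zE G j i) != 0] ->
    exists idx, (idx < size G')%N /\ nth zR G' idx = (fun i => m (nth zE G j i)).
  move=> j hj hne.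
  have hj' : (j < size [seq (fun i => m (F i)) | F <- G])%N by rewrite size_map.
  have hP' : [pred g : 'I_s -> R | [exists i, g i != 0]] (nth zR [seq (fun i => m (F i)) | F <- G] j).
    by rewrite /= (nth_map zE).
  have [idx [h1 h2]] := nth_filter_ex hj' hP'.
  by exists idx; rewrite h2 (nth_map zE).
have hMG : forall j, (j < size G)%N -> M (fun i => m (nth zE G j i)) by move=> j hj; case: (hin j hj).
have hMG' : forall idx, M (nth zR G' idx).
  move=> idx; case: (ltnP idx (size G')) => h.
    by have [j [hj -> _]] := hG'in idx h; apply: hMG.
  by rewrite nth_default.
split.
- move=> idx h; split; first exact: hMG'.
  by have [j [hj -> /existsP hne]] := hG'in idx h.
- move=> F; split.
  + move=> hF.
    have hF' : M (fun i => m (lam (F i))).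
      by have -> : (fun i => m (lam (F i))) = F by apply: functional_extensionality => i; rewrite m_lam.
    have [c hc] := (hspan (fun i => lam (F i))).1 hF'.
    have hgj : forall j : 'I_(size G), tspan G' (fun i => m (nth zE G j i)).
      move=> j; case: (boolP [exists i, m (nth zE G j i) != 0]) => hne.
        have [idx [hidx e]] := hG'ex j (ltn_ord j) hne.
        by rewrite -e; apply: tspan_gen.
      apply: tspan_ext (tspan0 G') _ => i.
      by move/existsPn: hne => /(_ i); rewrite negbK => /eqP ->.
    apply: tspan_ext (tspan_sum (index_enum 'I_(size G)) (F := fun j i => m (c j * nth zE G j i)) _) _.
      move=> j.
      apply: tspan_ext (tspan_sum (sl hbE (c j))
          (F := fun ab i => (cE (c j) ab *: smono x ab.1) * m (nth zE G j i) * smono x (mrev ab.2))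
          (fun ab => tspan_scale _ _ (hgj j))) _ => i.
      rewrite [c j in RHS](v_expand hbE (c j)) mulr_suml m_sum; apply: eq_bigr => ab _.
      by rewrite -!scalerAl mZ /env_basis mK.
    by move=> i; rewrite -[F i]m_lam hc m_sum.
  + move=> [l [hl hF]].
    have -> : F = (fun i => \sum_(t <- l) t.1.1 * nth zR G' t.1.2 i * t.2).
      by apply: functional_extensionality => i; rewrite hF.
    apply: M_sum => // tt; exact: hMS.
- move=> [e1 i0]; split.
  + move=> [f [hMf hnz hexp]].
    pose F' := fun i => if useLam o then lam (f i) else rho (f i).
    have hNF : M (fun i => m (F' i)).
      have -> : (fun i => m (F' i)) = f; last by [].
      by apply: functional_extensionality => i; rewrite /F'; case: (useLam o); rewrite ?m_lam ?m_rho.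
    have hexpF := lift_exp o hexp.
    have hnzF : vnonzero F' by exists i0; exact: (exp_nonzero hbE hexpF).
    have := (hexpE _).1 (ex_intro _ F' (And3 hNF hnzF hexpF)).
    move=> [j [hj [[ab i0'] [d [hexpG eq]]]]].
    case: eq => e1' ei; subst i0'.
    have hab : if useLam o then ab.2 = mzero n else ab.1 = mzero n.
      move: e1'; rewrite /madd2; case: (useLam o) => [[_ h]|[h _]]; apply: madd_eq0 (esym h).
    have hexpm := exp_m hab hexpG.
    have hne : [exists i, m (nth zE G j i) != 0].
      by apply/existsP; exists i0; exact: (exp_nonzero hbR hexpm).
    have [idx [hidx enth]] := hG'ex j hj hne.
    exists idx; split => //.
    exists (madd ab.1 (mrev ab.2), i0), (if useLam o then d.1 else mrev d.2); split.
      by rewrite enth.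
    move: e1' hab; rewrite /madd2; case: (useLam o) => [[-> _] ->|[_ h] ->].
      by rewrite mrev0 madd0.
    by rewrite /= madd0l -mrevD -h mrevK.
  + move=> [idx [hidx [[T i0'] [d [hexpg eq]]]]].
    case: eq => -> ->.
    have [j [hj enth _]] := hG'in idx hidx.
    rewrite enth in hexpg.
    have hexpf := exp_left d hexpg.
    exists (fun i => smono x d * m (nth zE G j i)); split => //.
      have := hMS (smono x d) 1 _ (hMG j hj).
      by have -> : (fun i => smono x d * m (nth zE G j i) * 1) = (fun i => smono x d * m (nth zE G j i))
        by apply: functional_extensionality => i; rewrite mulr1.
    by exists i0'; exact: (exp_nonzero hbR hexpf).
Qed.

End Main.


Unset Implicit Arguments.

Theorem mainTheorem6 (k : fieldType) (R E : algType k) (n : nat) (x : 'I_n -> R)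
    (q : 'I_n -> 'I_n -> k) (p : 'I_n -> 'I_n -> R) (le : rel (mono n))
    (lam rho : R -> E) (m : E -> R)
    (s : nat) (M : ('I_s -> R) -> Prop) (o : env_kind) (t : modord_kind)
    (G : seq ('I_s -> E)) :
  is_PBW x q p le ->
  is_env x lam rho ->
  is_mult_map lam rho m ->
  subbimodule M ->
  left_GB (env_basis x lam rho) (@madd2 n) (modlt t (env_lt le o))
    (fun F : 'I_s -> E => M (fun i => m (F i))) G ->
  twosided_GB (smono x) (@madd n) (modlt t (strict le)) M
    [seq g <- [seq (fun i => m (F i)) | F <- G] | [exists i, g i != 0]].
Proof.
move=> hP henv hm hM hGB.
exact: (main_thm hP henv hm hM hGB).
Qed.
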